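(* Let $\mathcal{A}$ be an alphabet with at least three letters. Then every steady word over $\mathcal{A}$ is bifurcate over $\mathcal{A}$.
   Context: A factor of a word $W$ is a contiguous subword. A square is a nonempty word of the form $XX$; a word is square-free if it has no factor that is a square. For a word $W$ of length $n$ and $0\le i\le n$, let $P_i(W)$ and $S_i(W)$ be the prefix and suffix of $W$ of length $i$. An extension of $W$ at position $i$ (over $\mathcal{A}$) is a word $P_i(W)\mathtt{x}S_{n-i}(W)$ with $\mathtt{x}\in\mathcal{A}$. A square-free word $W$ is steady if every word obtained from $W$ by deleting exactly one letter (at any position) is square-free. A square-free word $W$ of length $n$ is bifurcate over $\mathcal{A}$ if for every position $i\in\{0,1,\dots,n\}$ there is a letter $\mathtt{x}\in\mathcal{A}$ such that the extension $P_i(W)\mathtt{x}S_{n-i}(W)$ is square-free. *)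

(* Defs.v *)
From mathcomp Require Import all_boot.
Set Implicit Arguments. Unset Strict Implicit. Unset Printing Implicit Defensive.

Section Words.
Variable A : eqType.

Definition factor (u w : seq A) : Prop := exists p s, w = p ++ u ++ s.

Definition square (u : seq A) : Prop := exists x : seq A, x <> [::] /\ u = x ++ x.

Definition square_free (w : seq A) : Prop := forall u, factor u w -> ~ square u.

Definition pref (i : nat) (w : seq A) : seq A := take i w.
Definition suff (i : nat) (w : seq A) : seq A := drop (size w - i) w.

Definition extension (w : seq A) (i : nat) (x : A) : seq A :=
  pref i w ++ x :: suff (size w - i) w.

Definition delete_at (w : seq A) (i : nat) : seq A := take i w ++ drop i.+1 w.

Definition steady (w : seq A) : Prop :=
  square_free w /\ forall i, i < size w -> square_free (delete_at w i).

Definition bifurcate (w : seq A) : Prop :=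
  square_free w /\ forall i, i <= size w -> exists x : A, square_free (extension w i x).

End Words.

(* Main.v *)
Require Import Defs.
From mathcomp Require Import all_boot.
From mathcomp Require Import zify.

Section S.
Variable A : eqType.
Variable x0 : A.

Definition sqat (s : seq A) o m :=
  [/\ 0 < m, o + m + m <= size s & forall t, t < m -> nth x0 s (o+t) = nth x0 s (o+m+t)].

Lemma nth_cat_r (p r : seq A) t : nth x0 (p ++ r) (size p + t) = nth x0 r t.
Proof. by rewrite nth_cat ltnNge leq_addr /= addKn. Qed.

Lemma sf_of_nosq s : (forall o m, ~ sqat s o m) -> square_free s.
Proof.
move=> H u [p [q Es]] [y [ny Ey]]; subst u s.
apply: (H (size p) (size y)); split.
- by rewrite lt0n size_eq0; apply/eqP.
- rewrite !size_cat; lia.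
move=> t Ht; rewrite -addnA !nth_cat_r -catA nth_cat Ht nth_cat_r nth_cat Ht //.
Qed.

Lemma sqat_nsf s o m : sqat s o m -> ~ square_free s.
Proof.
case=> m0 ms Heq H.
set y := take m (drop o s).
have sy : size y = m by rewrite size_takel // size_drop; lia.
have E2 : take m (drop (o+m) s) = y.
  apply: (@eq_from_nth _ x0); first by rewrite sy size_takel // size_drop; lia.
  move=> i; rewrite size_takel ?size_drop; last lia.
  move=> Hi; rewrite !nth_take // !nth_drop -Heq //.
apply: (H (y ++ y)); last by exists y; split => //; move=> E; rewrite E in sy; subst m.
exists (take o s), (drop m (drop (o+m) s)).
have D1 : drop o s = y ++ drop (o+m) s by rewrite -{1}(cat_take_drop m (drop o s)) drop_drop addnC.
have D2 : drop (o+m) s = y ++ drop m (drop (o+m) s) by rewrite -{1}(cat_take_drop m (drop (o+m) s)) E2.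
by rewrite -{1}(cat_take_drop o s) D1 {1}D2 -!catA.
Qed.

Lemma nth_W (u v : seq A) x k :
  nth x0 (u ++ v) k = nth x0 (u ++ x :: v) (if k < size u then k else k.+1).
Proof.
rewrite !nth_cat; case: ltnP => Hk; first by rewrite Hk.
rewrite ltnNge (leq_trans Hk) //= subSn //.
Qed.

Lemma nth_D (w : seq A) j k : j < size w ->
  nth x0 (delete_at w j) k = nth x0 w (if k < j then k else k.+1).
Proof.
move=> Hj; rewrite /delete_at nth_cat size_takel ?(ltnW Hj) //.
case: ltnP => Hk; first by rewrite nth_take.
rewrite nth_drop; congr nth; lia.
Qed.

Lemma size_D (w : seq A) j : j < size w -> size (delete_at w j) = (size w).-1.
Proof.
move=> Hj; rewrite /delete_at size_cat size_takel ?(ltnW Hj) // size_drop; lia.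
Qed.

Lemma sq_pair s o m a b : (forall t, t < m -> nth x0 s (o+t) = nth x0 s (o+m+t)) ->
  b = a + m -> o <= a -> a < o + m -> nth x0 s a = nth x0 s b.
Proof.
move=> H -> Ha Hb.
have E1 : o + (a - o) = a by lia.
have E2 : o + m + (a - o) = a + m by lia.
rewrite -E2 -{1}E1; apply: H; lia.
Qed.

Lemma main_lemma (u v : seq A) x :
  square_free (u ++ v) ->
  (forall j, j < size (u ++ v) -> square_free (delete_at (u ++ v) j)) ->
  (0 < size u -> x != nth x0 (u ++ v) (size u).-1) ->
  (size u < size (u ++ v) -> x != nth x0 (u ++ v) (size u)) ->
  square_free (u ++ x :: v).
Proof.
move=> sfW sfD Hl Hr; apply: sf_of_nosq => o m [m0 ms Heq].
set W := u ++ v in sfW sfD Hl Hr.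
set n := size u in Hl Hr.
have En : size u = n by [].
have sW' : size (u ++ x :: v) = (size W).+1 by rewrite /W !size_cat /=; lia.
rewrite sW' in ms.
have nW : n <= size W by rewrite /n /W size_cat leq_addr.
have xn : nth x0 (u ++ x :: v) n = x by rewrite nth_cat ltnn subnn.
have Wl : 0 < n -> nth x0 W n.-1 = nth x0 (u ++ x :: v) n.-1.
  by move=> Hn; rewrite (nth_W u v x) (_ : n.-1 < size u) //; rewrite /n; lia.
have Wr : n < size W -> nth x0 W n = nth x0 (u ++ x :: v) n.+1.
  by move=> Hn; rewrite (nth_W u v x) ltnn.
case: (leqP (o + m + m) n) => C1.
  apply: (@sqat_nsf (W) (o) (m)) => //; split => // [|t Ht]; first lia.
  rewrite !(nth_W u v x); do ![case: ifP => [?|/negbT ?]];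
    (apply: (@sq_pair _ _ _ _ _ Heq); lia) || lia.
case: (ltnP n o) => C2.
  apply: (@sqat_nsf (W) (o.-1) (m)) => //; split => // [|t Ht]; first lia.
  rewrite !(nth_W u v x); do ![case: ifP => [?|/negbT ?]];
    (apply: (@sq_pair _ _ _ _ _ Heq); lia) || lia.
case: (ltnP n (o + m)) => C3.
  (* x in first half *)
  have m1 : 1 < m.
    case: (ltnP 1 m) => // mm; have m1' : m = 1 by lia.
    have := Heq 0 m0; rewrite m1' (_ : o = n); last lia.
    rewrite !addn0 addn1 xn -Wr; last lia.
    by move=> E; move: Hr; rewrite -E eqxx; apply; lia.
  have Hj : n + m - 1 < size W by lia.
  apply: (@sqat_nsf (delete_at W (n+m-1)) (o) (m-1)); last by apply: sfD.
  split => [|| t Ht]; first lia; first by rewrite size_D //; lia.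
  rewrite !nth_D //; do ![case: ifP => [?|/negbT ?]]; rewrite !(nth_W u v x); do ![case: ifP => [?|/negbT ?]];
    (apply: (@sq_pair _ _ _ _ _ Heq); lia) || lia.
(* x in second half *)
have m1 : 1 < m.
  case: (ltnP 1 m) => // mm; have m1' : m = 1 by lia.
  have := Heq 0 m0; rewrite m1' addn0 (_ : o + 1 + 0 = n); last lia.
  rewrite xn (_ : o = n.-1); last lia.
  rewrite -Wl; last lia.
  by move=> E; move: (Hl); rewrite E eqxx; apply; lia.
have Hj : n - m < size W by lia.
apply: (@sqat_nsf (delete_at W (n-m)) (o) (m-1)); last by apply: sfD.
split => [|| t Ht]; first lia; first by rewrite size_D //; lia.
rewrite !nth_D //; do ![case: ifP => [?|/negbT ?]]; rewrite !(nth_W u v x); do ![case: ifP => [?|/negbT ?]];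
  (apply: (@sq_pair _ _ _ _ _ Heq); lia) || lia.
Qed.

End S.

Lemma pick3 (A : eqType) (a b c l r : A) :
  a != b -> a != c -> b != c -> exists x, (x != l) && (x != r).
Proof.
move=> ab ac bc.
case: (eqVneq a l) => [al|al]; case: (eqVneq a r) => [ar|ar].
- by exists b; rewrite -al -ar [b == a]eq_sym ab.
- case: (eqVneq b r) => [br|br].
    by exists c; rewrite -al -br [c == a]eq_sym ac [c == b]eq_sym bc.
  by exists b; rewrite -al [b == a]eq_sym ab br.
- case: (eqVneq b l) => [bl|bl].
    by exists c; rewrite -ar -bl [c == a]eq_sym ac [c == b]eq_sym bc.
  by exists b; rewrite -ar [b == a]eq_sym ab bl.
- by exists a; rewrite al ar.
Qed.

Theorem mainTheorem4 (A : eqType)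
  (hA : exists a b c : A, [/\ a != b, a != c & b != c]) (w : seq A) :
  steady w -> bifurcate w.
Proof.
case: hA => a [b [c [ab ac bc]]] [sfw sfD]; split => // i Hi.
set l := nth a w i.-1; set r := nth a w i.
have [x /andP [xl xr]] : exists x, (x != l) && (x != r).
  exact: (@pick3 A a b c l r ab ac bc).
exists x.
rewrite /extension /pref /suff (_ : size w - (size w - i) = i); last lia.
have Ew : take i w ++ drop i w = w by rewrite cat_take_drop.
have su : size (take i w) = i by rewrite size_takel.
apply: (@main_lemma A a); rewrite ?Ew ?su //; by move=> _.
Qed.
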